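(* Let $\mathscr{H}$ be a finite-dimensional complex Hilbert space, let $A=\{a_k\}_{k=1}^{m}$ be a tight frame of $\mathscr{H}$ with frame bound $\alpha>0$ and $B=\{b_j\}_{j=1}^{n}$ a tight frame of $\mathscr{H}$ with frame bound $\beta>0$, and suppose that $A$ and $B$ are $s$-order incompatible. Then for every nonzero vector (pure state) $|\varphi\rangle\in\mathscr{H}$, $$n_A(|\varphi\rangle)+n_B(|\varphi\rangle)\ge s,$$ and the bound is optimal: $\min_{|\varphi\rangle\neq 0}\big(n_A(|\varphi\rangle)+n_B(|\varphi\rangle)\big)=s$.
   Context: A finite family $\{a_k\}_{k=1}^{m}\subset\mathscr{H}$ is a tight frame with frame bound $\alpha>0$ if $\sum_{k=1}^{m}|\langle x,a_k\rangle|^2=\alpha\|x\|^2$ for all $x\in\mathscr{H}$. Write $I=\{1,\dots,m\}$, $J=\{1,\dots,n\}$. The tight frames $A$ (bound $\alpha$) and $B$ (bound $\beta$) are called $s$-order incompatible, for an integer $s$, if: (1) for all nonempty $S\subseteq I$, $T\subseteq J$ with $|S|+|T|<s$ and every nonzero $x\in\mathscr{H}$, the two equalities $\sum_{k\in S}|\langle x,a_k\rangle|^2=\alpha\|x\|^2$ and $\sum_{j\in T}|\langle x,b_j\rangle|^2=\beta\|x\|^2$ do not both hold; and (2) there exist nonempty $S\subseteq I$, $T\subseteq J$ with $|S|+|T|=s$ and a nonzero $x\in\mathscr{H}$ for which both equalities hold. For a vector $|\varphi\rangle$, $n_A(|\varphi\rangle)$ is the number of indices $k$ with $\langle a_k,\varphi\rangle\neq0$,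 and $n_B(|\varphi\rangle)$ is the number of indices $j$ with $\langle b_j,\varphi\rangle\neq 0$. *)

(* Defs.v *)
From HB Require Import structures.
From mathcomp Require Import all_boot all_order all_algebra.
From mathcomp Require Import complex.
Set Implicit Arguments. Unset Strict Implicit. Unset Printing Implicit Defensive.
Import Order.TTheory GRing.Theory Num.Theory.
Local Open Scope ring_scope.

(* The Hilbert space H is C^d, realised as column vectors 'cV[R[i]]_d,
   where R[i] = complex R for a real closed field R (R = reals gives C). *)

Definition cdot (R : rcfType) (d : nat) (x y : 'cV[R[i]]_d) : R[i] :=
  \sum_(l < d) x l 0 * (y l 0)^*.

Definition cnorm2 (R : rcfType) (d : nat) (x : 'cV[R[i]]_d) : R[i] := cdot x x.

Definition fsum (R : rcfType) (d m : nat) (a : 'I_m -> 'cV[R[i]]_d)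
  (S : {set 'I_m}) (x : 'cV[R[i]]_d) : R[i] :=
  \sum_(k in S) `|cdot x (a k)| ^+ 2.

Definition tight_frame (R : rcfType) (d m : nat) (a : 'I_m -> 'cV[R[i]]_d)
  (alpha : R[i]) : Prop :=
  0 < alpha /\
  forall x : 'cV[R[i]]_d,
    \sum_(k < m) `|cdot x (a k)| ^+ 2 = alpha * cnorm2 x.

Definition s_order_incompatible (R : rcfType) (d m n : nat)
  (a : 'I_m -> 'cV[R[i]]_d) (alpha : R[i])
  (b : 'I_n -> 'cV[R[i]]_d) (beta : R[i]) (s : nat) : Prop :=
  (forall (S : {set 'I_m}) (T : {set 'I_n}),
      S != set0 -> T != set0 -> (#|S| + #|T| < s)%N ->
      forall x : 'cV[R[i]]_d, x != 0 ->
        ~ (fsum a S x = alpha * cnorm2 x /\ fsum b T x = beta * cnorm2 x))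
  /\
  (exists (S : {set 'I_m}) (T : {set 'I_n}) (x : 'cV[R[i]]_d),
      [/\ S != set0, T != set0, (#|S| + #|T|)%N = s & x != 0] /\
      fsum a S x = alpha * cnorm2 x /\ fsum b T x = beta * cnorm2 x).

Definition nsupp (R : rcfType) (d m : nat) (a : 'I_m -> 'cV[R[i]]_d)
  (phi : 'cV[R[i]]_d) : nat :=
  #|[set k : 'I_m | cdot (a k) phi != 0]|.

(* Main.v *)
Require Import Defs.
From HB Require Import structures.
From mathcomp Require Import all_boot all_order all_algebra.
From mathcomp Require Import complex.
Import Order.TTheory GRing.Theory Num.Theory.
Local Open Scope ring_scope.

Lemma cdotC (R : rcfType) (d : nat) (x y : 'cV[R[i]]_d) :
  cdot y x = (cdot x y)^*.
Proof.
rewrite /cdot rmorph_sum; apply: eq_bigr => l _.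
by rewrite rmorphM /= conjCK mulrC.
Qed.

Lemma cdot_neq0 (R : rcfType) (d : nat) (x y : 'cV[R[i]]_d) :
  (cdot y x != 0) = (cdot x y != 0).
Proof. by rewrite cdotC conjC_eq0. Qed.

Lemma cnorm2_gt0 (R : rcfType) (d : nat) (x : 'cV[R[i]]_d) :
  x != 0 -> 0 < cnorm2 x.
Proof.
move=> xn0.
have E : cnorm2 x = \sum_(l < d) `|x l 0| ^+ 2.
  by rewrite /cnorm2 /cdot; apply: eq_bigr => l _; rewrite normCK.
rewrite E lt_def sumr_ge0 ?andbT; last by move=> l _; rewrite exprn_ge0.
apply/negP => /eqP /psumr_eq0P H.
apply/negP: xn0; apply/negPn/eqP; apply/matrixP => l j.
rewrite (ord1 j) mxE.
have := H (fun i _ => exprn_ge0 2 (normr_ge0 _)) l isT.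
by move/eqP; rewrite sqrf_eq0 normr_eq0 => /eqP.
Qed.

Arguments cnorm2_gt0 {R d x}.

Lemma fsum_full (R : rcfType) (d m : nat) (a : 'I_m -> 'cV[R[i]]_d) alpha
  (S : {set 'I_m}) (x : 'cV[R[i]]_d) :
  tight_frame a alpha ->
  (fsum a S x = alpha * cnorm2 x <-> forall k, k \notin S -> cdot x (a k) = 0).
Proof.
case=> _ /(_ x) <-; rewrite /fsum [X in _ = X](bigID (fun k => k \in S)) /=.
split.
- move=> /eqP; rewrite eq_sym -subr_eq0 addrC addrK => /eqP /psumr_eq0P H k kS.
  have := H (fun i _ => exprn_ge0 2 (normr_ge0 _)) k kS.
  by move/eqP; rewrite sqrf_eq0 normr_eq0 => /eqP.
- move=> H; rewrite [X in _ = _ + X]big1 ?addr0 // => k kS; by rewrite H // normr0 expr0n.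
Qed.

Arguments fsum_full {R d m a alpha S x}.

Lemma supp_full (R : rcfType) (d m : nat) (a : 'I_m -> 'cV[R[i]]_d) alpha
  (x : 'cV[R[i]]_d) :
  tight_frame a alpha ->
  fsum a [set k | cdot (a k) x != 0] x = alpha * cnorm2 x.
Proof.
move=> ta; apply/(fsum_full ta) => k; rewrite inE negbK cdotC conjC_eq0.
by move/eqP.
Qed.

Arguments supp_full {R d m a alpha}.

Lemma supp_nonempty (R : rcfType) (d m : nat) (a : 'I_m -> 'cV[R[i]]_d) alpha
  (x : 'cV[R[i]]_d) :
  tight_frame a alpha -> x != 0 ->
  [set k | cdot (a k) x != 0] != set0.
Proof.
move=> ta xn0; apply/negP => /eqP E.
have := supp_full x ta; rewrite E /fsum big_set0 => /eqP.
rewrite eq_sym mulf_eq0 => /orP [|].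
- by case: ta => /lt0r_neq0 /negPf ->.
- by rewrite (negPf (lt0r_neq0 (cnorm2_gt0 xn0))).
Qed.

Arguments supp_nonempty {R d m a alpha x}.

Lemma supp_sub (R : rcfType) (d m : nat) (a : 'I_m -> 'cV[R[i]]_d) alpha
  (S : {set 'I_m}) (x : 'cV[R[i]]_d) :
  tight_frame a alpha -> fsum a S x = alpha * cnorm2 x ->
  (nsupp a x <= #|S|)%N.
Proof.
move=> ta /(fsum_full ta) H; rewrite /nsupp; apply: subset_leq_card.
apply/subsetP => k; rewrite inE cdot_neq0; apply: contraR => kS.
by rewrite H.
Qed.

Arguments supp_sub {R d m a alpha S x}.

Theorem mainTheorem2 (R : rcfType) (d m n : nat)
  (a : 'I_m -> 'cV[R[i]]_d) (alpha : R[i])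
  (b : 'I_n -> 'cV[R[i]]_d) (beta : R[i]) (s : nat) :
  tight_frame a alpha -> tight_frame b beta ->
  s_order_incompatible a alpha b beta s ->
  (forall phi : 'cV[R[i]]_d, phi != 0 -> (s <= nsupp a phi + nsupp b phi)%N) /\
  (exists phi : 'cV[R[i]]_d, phi != 0 /\ (nsupp a phi + nsupp b phi)%N = s).
Proof.
move=> ta tb [inc [S [T [x [[Sn Tn Hs xn0] [HS HT]]]]]].
have P1 : forall phi : 'cV[R[i]]_d, phi != 0 -> (s <= nsupp a phi + nsupp b phi)%N.
  move=> phi phin0; rewrite leqNgt; apply/negP => lt.
  exact: (inc _ _ (supp_nonempty ta phin0) (supp_nonempty tb phin0) lt phi phin0
            (conj (supp_full phi ta) (supp_full phi tb))).
split => //; exists x; split => //.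
apply/eqP; rewrite eqn_leq P1 // andbT -Hs.
by apply: leq_add; [exact: supp_sub ta HS | exact: supp_sub tb HT].
Qed.
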